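(* The multi-ideal $\mathcal{L}_\varepsilon$ is not represented by the injective tensor norm $\varepsilon$.
   Context: All spaces are over a fixed field $\mathbb{K}=\mathbb{R}$ or $\mathbb{C}$. $\mathcal{L}(E_1,\ldots,E_n;F)$ is the space of continuous $n$-linear maps with the sup norm, and $E'$ is the dual of $E$. $\varepsilon=(\varepsilon_n)$ is the injective tensor norm, $\varepsilon_n(\sum_j x^{(1)}_j\otimes\cdots\otimes x^{(n)}_j)=\sup_{\varphi_l\in B_{E_l'}}|\sum_j\varphi_1(x_j^{(1)})\cdots\varphi_n(x_j^{(n)})|$. $\mathcal{L}_\varepsilon(E_1,\ldots,E_n;F)$ is the space of $A\in\mathcal{L}(E_1,\ldots,E_n;F)$ whose linearization $A_L\colon(E_1\otimes\cdots\otimes E_n,\varepsilon_n)\to F$, $A_L(x_1\otimes\cdots\otimes x_n)=A(x_1,\ldots,x_n)$, is continuous. Its norm is $\|A\|=\|A_L\|$. A multi-ideal $\mathcal M$ is represented by a tensor norm $\beta$ if for every $n$ and all Banach spaces $E_1,\ldots,E_n,F$ the canonical map $\varphi\colon\mathcal{M}(E_1,\ldots,E_n;F')\to(E_1\otimes\cdots\otimes E_n\otimes F,\beta_{n+1})'$, $\varphi(T)(x_1\otimes\cdots\otimes x_n\otimes y)=T(x_1,\ldots,x_n)(y)$, is an isometric isomorphism onto. *)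

(* Defs.v *)
From Stdlib Require Import Reals List Arith.
Open Scope R_scope.
Set Implicit Arguments.
Unset Strict Implicit.

Inductive field_kind := KReal | KComplex.

Definition Cx : Type := (R * R)%type.
Definition cadd (a b : Cx) : Cx := (fst a + fst b, snd a + snd b).
Definition cmul (a b : Cx) : Cx :=
  (fst a * fst b - snd a * snd b, fst a * snd b + snd a * fst b).
Definition copp (a : Cx) : Cx := (- fst a, - snd a).
Definition cabs (a : Cx) : R := sqrt (fst a * fst a + snd a * snd a).

Definition scal (k : field_kind) : Type :=
  match k with KReal => R | KComplex => Cx end.
Definition sadd (k : field_kind) : scal k -> scal k -> scal k :=
  match k return scal k -> scal k -> scal k with
  | KReal => Rplus | KComplex => cadd end.
Definition smul (k : field_kind) : scal k -> scal k -> scal k :=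
  match k return scal k -> scal k -> scal k with
  | KReal => Rmult | KComplex => cmul end.
Definition sopp (k : field_kind) : scal k -> scal k :=
  match k return scal k -> scal k with
  | KReal => Ropp | KComplex => copp end.
Definition szero (k : field_kind) : scal k :=
  match k return scal k with KReal => 0 | KComplex => (0, 0) end.
Definition sone (k : field_kind) : scal k :=
  match k return scal k with KReal => 1 | KComplex => (1, 0) end.
Definition sabs (k : field_kind) : scal k -> R :=
  match k return scal k -> R with KReal => Rabs | KComplex => cabs end.
Arguments sadd {k} _ _.
Arguments smul {k} _ _.
Arguments sopp {k} _.
Arguments sabs {k} _.

Record Banach (k : field_kind) := mkBanach {
  carrier :> Type;
  vadd : carrier -> carrier -> carrier;
  vzero : carrier;
  vopp : carrier -> carrier;
  vscal : scal k -> carrier -> carrier;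
  vnorm : carrier -> R;
  vaddA : forall u v w, vadd u (vadd v w) = vadd (vadd u v) w;
  vaddC : forall u v, vadd u v = vadd v u;
  vadd0 : forall u, vadd vzero u = u;
  vaddN : forall u, vadd (vopp u) u = vzero;
  vscal1 : forall u, vscal (sone k) u = u;
  vscalA : forall a b u, vscal a (vscal b u) = vscal (smul a b) u;
  vscalDr : forall a u v, vscal a (vadd u v) = vadd (vscal a u) (vscal a v);
  vscalDl : forall a b u, vscal (sadd a b) u = vadd (vscal a u) (vscal b u);
  vnorm_eq0 : forall u, vnorm u = 0 -> u = vzero;
  vnormZ : forall a u, vnorm (vscal a u) = sabs a * vnorm u;
  vnorm_triangle : forall u v, vnorm (vadd u v) <= vnorm u + vnorm v;
  vcomplete : forall s : nat -> carrier,
    (forall eps, 0 < eps -> exists N, forall m p, (N <= m)%nat -> (N <= p)%nat ->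
        vnorm (vadd (s m) (vopp (s p))) < eps) ->
    exists l, forall eps, 0 < eps -> exists N, forall m, (N <= m)%nat ->
        vnorm (vadd (s m) (vopp l)) < eps
}.
Arguments vadd {k} _ _ _.
Arguments vzero {k} _.
Arguments vopp {k} _ _.
Arguments vscal {k} _ _ _.
Arguments vnorm {k} _ _.

Definition is_linfun k (X : Banach k) (f : X -> scal k) : Prop :=
  forall a u v, f (vadd X (vscal X a u) v) = sadd (smul a (f u)) (f v).
Definition is_bounded_fun k (X : Banach k) (f : X -> scal k) : Prop :=
  exists M, forall x, sabs (f x) <= M * vnorm X x.
Definition in_dual_ball k (X : Banach k) (f : X -> scal k) : Prop :=
  is_linfun f /\ forall x, sabs (f x) <= vnorm X x.

(* A family is indexed by nat; only the indices i < n are relevant. *)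
Definition pt k (E : nat -> Banach k) : Type := forall i : nat, carrier (E i).

Definition upd k (E : nat -> Banach k) (x : pt E) (i : nat) (v : E i) : pt E :=
  fun j => match Nat.eq_dec i j with
           | left e => eq_rect i (fun j => carrier (E j)) v j e
           | right _ => x j
           end.
Arguments upd {k E} x i v _.

Fixpoint sprod k (n : nat) (g : nat -> scal k) : scal k :=
  match n with O => sone k | S m => smul (sprod m g) (g m) end.
Fixpoint rprod (n : nat) (g : nat -> R) : R :=
  match n with O => 1 | S m => rprod m g * g m end.
Definition ssum k A (g : A -> scal k) (l : list A) : scal k :=
  fold_right (fun a s => sadd (g a) s) (szero k) l.

(* A tensor sum_j x_j^(0) (x) ... (x) x_j^(n-1) is represented by the list of
   its elementary tensors; [eps_le n E u c] means eps_n(u) <= c. *)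
Definition eps_le k (n : nat) (E : nat -> Banach k) (u : list (pt E)) (c : R) : Prop :=
  forall phi : forall i, E i -> scal k,
    (forall i, (i < n)%nat -> in_dual_ball (phi i)) ->
    sabs (ssum (fun x => sprod n (fun i => phi i (x i))) u) <= c.

Definition eps_le1 k (n : nat) (E : nat -> Banach k) (F : Banach k)
    (u : list (pt E * F)) (c : R) : Prop :=
  forall (phi : forall i, E i -> scal k) (psi : F -> scal k),
    (forall i, (i < n)%nat -> in_dual_ball (phi i)) -> in_dual_ball psi ->
    sabs (ssum (fun p => smul (sprod n (fun i => phi i (fst p i))) (psi (snd p))) u) <= c.

(* ---------- maps T : E_0 x ... x E_{n-1} -> F', written T x y = T(x)(y) ---------- *)
Definition multilin_x k (n : nat) (E : nat -> Banach k) (F : Banach k)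
    (T : pt E -> F -> scal k) : Prop :=
  (forall i, (i < n)%nat -> forall (x : pt E) a (v w : E i) (y : F),
     T (upd x i (vadd (E i) (vscal (E i) a v) w)) y
     = sadd (smul a (T (upd x i v) y)) (T (upd x i w) y))
  /\ (forall x x' : pt E, (forall i, (i < n)%nat -> x i = x' i) ->
        forall y, T x y = T x' y).

Definition in_L_dual k (n : nat) (E : nat -> Banach k) (F : Banach k)
    (T : pt E -> F -> scal k) : Prop :=
  multilin_x n T /\
  (forall x, is_linfun (T x) /\ is_bounded_fun (T x)) /\
  exists C, forall x y,
    sabs (T x y) <= C * rprod n (fun i => vnorm (E i) (x i)) * vnorm F y.

Definition Leps_bound k (n : nat) (E : nat -> Banach k) (F : Banach k)
    (T : pt E -> F -> scal k) (C : R) : Prop :=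
  forall (u : list (pt E)) (c : R), eps_le n u c ->
    forall y : F, sabs (ssum (fun x => T x y) u) <= C * c * vnorm F y.

Definition in_Leps_dual k (n : nat) (E : nat -> Banach k) (F : Banach k)
    (T : pt E -> F -> scal k) : Prop :=
  in_L_dual n T /\ exists C, Leps_bound n T C.

(* (n+1)-linear forms on E_0 x ... x E_{n-1} x F, i.e. linear functionals on
   the algebraic tensor product E_0 (x) ... (x) E_{n-1} (x) F *)
Definition is_form k (n : nat) (E : nat -> Banach k) (F : Banach k)
    (B : pt E -> F -> scal k) : Prop :=
  multilin_x n B /\ forall x, is_linfun (B x).

Definition eps_dual_bound k (n : nat) (E : nat -> Banach k) (F : Banach k)
    (B : pt E -> F -> scal k) (C : R) : Prop :=
  forall (u : list (pt E * F)) (c : R), eps_le1 n u c ->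
    sabs (ssum (fun p => B (fst p) (snd p)) u) <= C * c.

(* The canonical map phi(T)(x_0 (x) ... (x) x_{n-1} (x) y) = T(x)(y) is the
   identity on the underlying function (x,y) |-> T x y.  Being an isometric
   isomorphism onto means: phi(T) lies in the dual with the same norm as T
   (equal sets of norm bounds), and every element of the dual is some phi(T). *)
Definition Leps_represented_by_eps (k : field_kind) : Prop :=
  forall (n : nat), (1 <= n)%nat ->
  forall (E : nat -> Banach k) (F : Banach k),
    (forall T : pt E -> F -> scal k, in_Leps_dual n T ->
        (exists C, eps_dual_bound n T C) /\
        (forall C, 0 <= C -> (Leps_bound n T C <-> eps_dual_bound n T C)))
    /\
    (forall B : pt E -> F -> scal k, is_form n B -> (exists C, eps_dual_bound n B C) ->
        exists T : pt E -> F -> scal k, in_Leps_dual n T /\ forall x y, T x y = B x y).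

(* Main.v *)
Require Import Defs.
From Stdlib Require Import Reals List Arith.
From Stdlib Require Import Lra Psatz.
Open Scope R_scope.
Ltac cxr k := destruct k; simpl in *;
  [ ring | repeat match goal with p : Cx |- _ => destruct p end;
           unfold cadd, cmul, copp; simpl; f_equal; ring ].
Lemma sadd_assoc k (a b c : scal k) : sadd a (sadd b c) = sadd (sadd a b) c.
Proof. cxr k. Qed.
Lemma smul_assoc k (a b c : scal k) : smul a (smul b c) = smul (smul a b) c.
Proof. cxr k. Qed.
Lemma cabs_mul a b : cabs (cmul a b) = cabs a * cabs b.
Proof. destruct a as [a1 a2], b as [b1 b2]; unfold cabs, cmul; simpl.
rewrite <- sqrt_mult_alt by nra. f_equal. ring. Qed.
Lemma cabs_tri a b : cabs (cadd a b) <= cabs a + cabs b.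
Proof. destruct a as [a1 a2], b as [b1 b2]; unfold cabs, cadd; simpl.
pose proof (sqrt_pos (a1*a1+a2*a2)). pose proof (sqrt_pos (b1*b1+b2*b2)).
pose proof (sqrt_sqrt (a1*a1+a2*a2) ltac:(nra)). pose proof (sqrt_sqrt (b1*b1+b2*b2) ltac:(nra)).
set (A := sqrt (a1*a1+a2*a2)) in *. set (B := sqrt (b1*b1+b2*b2)) in *.
rewrite <- (sqrt_Rsqr (A+B)) by lra. apply sqrt_le_1_alt. unfold Rsqr.
assert (a1*b1+a2*b2 <= A*B).
{ assert (HL: (A*B)^2 - (a1*b1+a2*b2)^2 = (a1*b2-a2*b1)^2) by (replace ((A*B)^2) with ((A*A)*(B*B)) by ring; rewrite H1, H2; ring).
  assert (0 <= A*B) by nra. assert (0 <= (a1*b2-a2*b1)^2) by apply pow2_ge_0.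
  destruct (Rle_dec (a1*b1+a2*b2) (A*B)); auto. nra. }
replace ((A+B)*(A+B)) with (A*A + B*B + 2*(A*B)) by ring. rewrite H1, H2. nra. Qed.
Lemma sadd_comm k (a b : scal k) : sadd a b = sadd b a.
Proof. cxr k. Qed.
Lemma sadd0 k (a : scal k) : sadd (szero k) a = a.
Proof. cxr k. Qed.
Lemma saddN k (a : scal k) : sadd (sopp a) a = szero k.
Proof. cxr k. Qed.
Lemma smul1 k (a : scal k) : smul (sone k) a = a.
Proof. cxr k. Qed.
Lemma smulDr k (a b c : scal k) : smul a (sadd b c) = sadd (smul a b) (smul a c).
Proof. cxr k. Qed.
Lemma smulDl k (a b c : scal k) : smul (sadd a b) c = sadd (smul a c) (smul b c).
Proof. cxr k. Qed.
Lemma smulC k (a b : scal k) : smul a b = smul b a.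
Proof. cxr k. Qed.
Lemma smul0r k (a : scal k) : smul a (szero k) = szero k.
Proof. cxr k. Qed.

Lemma cabs_fst a : Rabs (fst a) <= cabs a.
Proof. destruct a as [a1 a2]; unfold cabs; simpl.
rewrite <- sqrt_Rsqr_abs. apply sqrt_le_1_alt. unfold Rsqr; nra. Qed.
Lemma cabs_snd a : Rabs (snd a) <= cabs a.
Proof. destruct a as [a1 a2]; unfold cabs; simpl.
rewrite <- sqrt_Rsqr_abs. apply sqrt_le_1_alt. unfold Rsqr; nra. Qed.
Lemma cabs_le a : cabs a <= Rabs (fst a) + Rabs (snd a).
Proof. destruct a as [a1 a2]; unfold cabs; simpl.
rewrite <- (sqrt_Rsqr (Rabs a1 + Rabs a2)) by (pose proof (Rabs_pos a1); pose proof (Rabs_pos a2); lra).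
apply sqrt_le_1_alt. unfold Rsqr.
pose proof (Rabs_pos a1); pose proof (Rabs_pos a2).
replace (a1*a1) with (Rabs a1 * Rabs a1) by (rewrite <- Rabs_mult; apply Rabs_pos_eq; nra).
replace (a2*a2) with (Rabs a2 * Rabs a2) by (rewrite <- Rabs_mult; apply Rabs_pos_eq; nra).
nra. Qed.

Lemma sabs_ge0 k (a : scal k) : 0 <= sabs a.
Proof. destruct k; simpl. apply Rabs_pos. apply sqrt_pos. Qed.
Lemma sabs_eq0 k (a : scal k) : sabs a = 0 -> a = szero k.
Proof. destruct k; simpl; intro H.
- destruct (Req_dec a 0); auto. exfalso; apply Rabs_no_R0 in H0; auto.
- destruct a as [a1 a2]; unfold cabs in H; simpl in H.
  apply sqrt_eq_0 in H; [|nra]. f_equal; nra. Qed.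
Lemma sabs_mul k (a b : scal k) : sabs (smul a b) = sabs a * sabs b.
Proof. destruct k; simpl. apply Rabs_mult. apply cabs_mul. Qed.
Lemma sabs_tri k (a b : scal k) : sabs (sadd a b) <= sabs a + sabs b.
Proof. destruct k; simpl. apply Rabs_triang. apply cabs_tri. Qed.
Lemma sabs_0 k : sabs (szero k) = 0.
Proof. destruct k; simpl. apply Rabs_R0. unfold cabs; simpl.
replace (0*0+0*0) with 0 by ring. apply sqrt_0. Qed.
Lemma sabs_opp k (a : scal k) : sabs (sopp a) = sabs a.
Proof. destruct k; simpl. apply Rabs_Ropp. destruct a; unfold cabs, copp; simpl.
f_equal; ring. Qed.

Definition sreal k (r : R) : scal k :=
  match k return scal k with KReal => r | KComplex => (r, 0) end.
Lemma sabs_sreal k r : sabs (sreal k r) = Rabs r.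
Proof. destruct k; simpl; auto. unfold cabs; simpl.
replace (r*r+0*0) with (Rsqr r) by (unfold Rsqr; ring). apply sqrt_Rsqr_abs. Qed.

Lemma Rcomplete' (s : nat -> R) :
  (forall eps, 0 < eps -> exists N, forall m p, (N <= m)%nat -> (N <= p)%nat ->
        Rabs (s m + - s p) < eps) ->
  exists l, forall eps, 0 < eps -> exists N, forall m, (N <= m)%nat -> Rabs (s m + - l) < eps.
Proof. intros H. destruct (R_complete s) as [l Hl].
- intros eps He. destruct (H eps He) as [N HN]. exists N. intros n m Hn Hm.
  unfold R_dist. apply HN; lia.
- exists l. intros eps He. destruct (Hl eps He) as [N HN]. exists N. intros m Hm.
  apply HN. lia. Qed.

Lemma scomplete k (s : nat -> scal k) :
  (forall eps, 0 < eps -> exists N, forall m p, (N <= m)%nat -> (N <= p)%nat ->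
        sabs (sadd (s m) (sopp (s p))) < eps) ->
  exists l, forall eps, 0 < eps -> exists N, forall m, (N <= m)%nat ->
        sabs (sadd (s m) (sopp l)) < eps.
Proof. destruct k; simpl; intro H. apply Rcomplete'; auto.
destruct (Rcomplete' (fun n => fst (s n))) as [l1 H1].
{ intros eps He. destruct (H eps He) as [N HN]. exists N. intros m p Hm Hp.
  eapply Rle_lt_trans; [|apply (HN m p Hm Hp)]. apply (cabs_fst (cadd (s m) (copp (s p)))). }
destruct (Rcomplete' (fun n => snd (s n))) as [l2 H2].
{ intros eps He. destruct (H eps He) as [N HN]. exists N. intros m p Hm Hp.
  eapply Rle_lt_trans; [|apply (HN m p Hm Hp)]. apply (cabs_snd (cadd (s m) (copp (s p)))). }
exists (l1, l2). intros eps He.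
destruct (H1 (eps/2) ltac:(lra)) as [N1 HN1]. destruct (H2 (eps/2) ltac:(lra)) as [N2 HN2].
exists (N1 + N2)%nat. intros m Hm.
eapply Rle_lt_trans; [apply cabs_le|]. simpl.
specialize (HN1 m ltac:(lia)). specialize (HN2 m ltac:(lia)). simpl in *. lra. Qed.

Section V.
Variable k : field_kind.
Definition Vc := (scal k * scal k)%type.
Definition Vadd (u v : Vc) : Vc := (sadd (fst u) (fst v), sadd (snd u) (snd v)).
Definition Vzero : Vc := (szero k, szero k).
Definition Vopp (u : Vc) : Vc := (sopp (fst u), sopp (snd u)).
Definition Vscal (a : scal k) (u : Vc) : Vc := (smul a (fst u), smul a (snd u)).
Definition Vnorm (u : Vc) : R := sabs (fst u) + sabs (snd u).

Lemma V_complete (s : nat -> Vc) :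
    (forall eps, 0 < eps -> exists N, forall m p, (N <= m)%nat -> (N <= p)%nat ->
        Vnorm (Vadd (s m) (Vopp (s p))) < eps) ->
    exists l, forall eps, 0 < eps -> exists N, forall m, (N <= m)%nat ->
        Vnorm (Vadd (s m) (Vopp l)) < eps.
Proof. intros H. unfold Vnorm, Vadd, Vopp in *; simpl in *.
destruct (scomplete k (fun n => fst (s n))) as [l1 H1].
{ intros eps He. destruct (H eps He) as [N HN]. exists N. intros m p Hm Hp.
  specialize (HN m p Hm Hp). pose proof (sabs_ge0 _ (sadd (snd (s m)) (sopp (snd (s p))))). lra. }
destruct (scomplete k (fun n => snd (s n))) as [l2 H2].
{ intros eps He. destruct (H eps He) as [N HN]. exists N. intros m p Hm Hp.
  specialize (HN m p Hm Hp). pose proof (sabs_ge0 _ (sadd (fst (s m)) (sopp (fst (s p))))). lra. }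
exists (l1, l2). intros eps He.
destruct (H1 (eps/2) ltac:(lra)) as [N1 HN1]. destruct (H2 (eps/2) ltac:(lra)) as [N2 HN2].
exists (N1 + N2)%nat. intros m Hm.
specialize (HN1 m ltac:(lia)). specialize (HN2 m ltac:(lia)). simpl in *. lra. Qed.

Definition VB : Banach k.
refine (@mkBanach k Vc Vadd Vzero Vopp Vscal Vnorm _ _ _ _ _ _ _ _ _ _ _ V_complete).
- intros [] [] []; unfold Vadd; simpl; f_equal; apply sadd_assoc.
- intros [] []; unfold Vadd; simpl; f_equal; apply sadd_comm.
- intros []; unfold Vadd; simpl; f_equal; apply sadd0.
- intros []; unfold Vadd, Vzero; simpl; f_equal; apply saddN.
- intros []; unfold Vscal; simpl; f_equal; apply smul1.
- intros a b []; unfold Vscal; simpl; f_equal; apply smul_assoc.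
- intros a [] []; unfold Vscal, Vadd; simpl; f_equal; apply smulDr.
- intros a b []; unfold Vscal, Vadd; simpl; f_equal; apply smulDl.
- intros [u1 u2]; unfold Vnorm; simpl; intro H.
  pose proof (sabs_ge0 _ u1); pose proof (sabs_ge0 _ u2).
  unfold Vzero; f_equal; apply sabs_eq0; lra.
- intros a []; unfold Vnorm, Vscal; simpl. rewrite !sabs_mul. ring.
- intros [] []; unfold Vnorm, Vadd; simpl.
  pose proof (sabs_tri _ s s1); pose proof (sabs_tri _ s0 s2). lra.
Defined.
End V.
Arguments Vadd {k}. Arguments Vscal {k}. Arguments Vopp {k}. Arguments Vnorm {k}.

Lemma sabs_1 k : sabs (sone k) = 1.
Proof. destruct k; simpl. apply Rabs_R1. unfold cabs; simpl.
replace (1*1+0*0) with 1 by ring. apply sqrt_1. Qed.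

Definition Bf k (x y : Vc k) : scal k :=
  sadd (smul (fst x) (sadd (fst y) (snd y))) (smul (snd x) (sadd (fst y) (sopp (snd y)))).
Arguments Bf {k}.

Ltac cxv k := repeat match goal with p : Vc _ |- _ => destruct p end;
  destruct k; simpl in *;
  [ ring | repeat match goal with p : Cx |- _ => destruct p end;
           unfold cadd, cmul, copp; simpl; f_equal; ring ].

Lemma Bf_lin1 k a (v w y : Vc k) :
  Bf (Vadd (Vscal a v) w) y = sadd (smul a (Bf v y)) (Bf w y).
Proof. unfold Bf, Vadd, Vscal. cxv k. Qed.
Lemma Bf_lin2 k a (v w x : Vc k) :
  Bf x (Vadd (Vscal a v) w) = sadd (smul a (Bf x v)) (Bf x w).
Proof. unfold Bf, Vadd, Vscal. cxv k. Qed.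
Lemma Bf_zero k (x : Vc k) : Bf x (Vzero k) = szero k.
Proof. unfold Bf, Vzero. cxv k. Qed.
Lemma Bf_bound k (x y : Vc k) : sabs (Bf x y) <= Vnorm x * Vnorm y.
Proof. destruct x as [x1 x2], y as [y1 y2]; unfold Bf, Vnorm; simpl.
eapply Rle_trans; [apply sabs_tri|]. rewrite !sabs_mul.
pose proof (sabs_tri _ y1 y2). pose proof (sabs_tri _ y1 (sopp y2)). rewrite sabs_opp in H0.
pose proof (sabs_ge0 _ x1). pose proof (sabs_ge0 _ x2).
pose proof (sabs_ge0 _ y1). pose proof (sabs_ge0 _ y2).
nra. Qed.
Lemma smul_lin k (r a b c : scal k) :
  smul r (sadd (smul a b) c) = sadd (smul a (smul r b)) (smul r c).
Proof. cxr k. Qed.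

Lemma sqrt_sum3 P Q : 0 <= P -> 0 <= Q -> P + Q <= 4 -> sqrt P + sqrt Q <= 3.
Proof. intros HP HQ HPQ.
pose proof (sqrt_pos P); pose proof (sqrt_pos Q).
pose proof (sqrt_sqrt P HP); pose proof (sqrt_sqrt Q HQ).
set (A := sqrt P) in *; set (B := sqrt Q) in *.
pose proof (pow2_ge_0 (A-B)). assert ((A+B)*(A+B) <= 8) by nra.
destruct (Rle_dec (A+B) 3); auto. nra. Qed.

Lemma key_ineq k (t1 t2 : scal k) : sabs t1 <= 1 -> sabs t2 <= 1 ->
  sabs (sadd (smul (sone k) t1) t2) +
  sabs (sadd (smul (sone k) t1) (sadd (smul (sopp (sone k)) t2) (szero k))) <= 3.
Proof. destruct k; simpl; intros H1 H2.
- unfold Rabs in *; repeat destruct Rcase_abs; lra.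
- destruct t1 as [a b], t2 as [c d]; unfold cabs, cadd, cmul, copp in *; simpl in *.
  assert (a*a+b*b <= 1).
  { destruct (Rle_dec (a*a+b*b) 1); auto. exfalso.
    assert (1 < sqrt (a*a+b*b)); [|lra]. rewrite <- sqrt_1. apply sqrt_lt_1_alt; lra. }
  assert (c*c+d*d <= 1).
  { destruct (Rle_dec (c*c+d*d) 1); auto. exfalso.
    assert (1 < sqrt (c*c+d*d)); [|lra]. rewrite <- sqrt_1. apply sqrt_lt_1_alt; lra. }
  apply sqrt_sum3; [ match goal with |- 0 <= ?x*?x + ?y*?y => pose proof (Rle_0_sqr x); pose proof (Rle_0_sqr y); unfold Rsqr in *; lra end .. | ].
  match goal with |- ?L <= 4 => replace L with (2*((a*a+b*b)+(c*c+d*d))) by ring; lra end.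
Qed.

Lemma eq_rect_const (A B : Type) (x y : A) (v : B) (e : x = y) :
  eq_rect x (fun _ => B) v y e = v.
Proof. destruct e; reflexivity. Qed.

Section Main.
Variable k : field_kind.
Let V := VB k.
Let E := fun _ : nat => V.
Definition Tm (x : pt E) (y : V) : scal k := Bf (x 0%nat) y.

Lemma upd0 (x : pt E) (v : V) : upd x 0%nat v 0%nat = v.
Proof. unfold upd. destruct (Nat.eq_dec 0%nat 0%nat) as [e|n]; [|contradiction].
apply (eq_rect_const nat (Vc k) 0%nat 0%nat v e). Qed.

Lemma ssum_scale (r : scal k) (h : pt E -> scal k) (u : list (pt E)) :
  ssum (fun x => smul (sone k) (smul r (h x))) u = smul r (ssum h u).
Proof. induction u as [|a u IH]; simpl. symmetry; apply smul0r.
rewrite IH, smul1, smulDr. reflexivity. Qed.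

Lemma ssum_zero (h : pt E -> scal k) (u : list (pt E)) :
  (forall x, h x = szero k) -> ssum h u = szero k.
Proof. intros Hh; induction u as [|a u IH]; simpl; auto.
rewrite IH, Hh. apply sadd0. Qed.

Lemma Tm_L : in_L_dual 1 Tm.
Proof. split; [split|split].
- intros i Hi x a v w y. assert (i = 0%nat) by lia. subst i. unfold Tm.
  rewrite !upd0. apply Bf_lin1.
- intros x x' Hx y. unfold Tm. rewrite (Hx 0%nat ltac:(lia)). reflexivity.
- intros x. split.
  + intros a v w. unfold Tm. apply Bf_lin2.
  + exists (Vnorm (x 0%nat)). intros y. apply Bf_bound.
- exists 1. intros x y. simpl. unfold Tm.
  pose proof (Bf_bound k (x 0%nat) y). simpl in H. lra.
Qed.

Lemma Tm_Leps : Leps_bound 1 Tm 1.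
Proof. intros u c Hu y.
pose proof (@vnorm_eq0 k V y) as Hy0.
assert (Hn : 0 <= Vnorm y) by (unfold Vnorm; pose proof (sabs_ge0 _ (fst y)); pose proof (sabs_ge0 _ (snd y)); lra).
destruct (Req_dec (Vnorm y) 0) as [Hz|Hz].
- specialize (Hy0 Hz). simpl in Hy0. subst y. simpl. rewrite Hz.
  rewrite ssum_zero. rewrite sabs_0; lra. intros x. unfold Tm. apply Bf_zero.
- set (r := sreal k (/ Vnorm y)).
  assert (Hr : sabs r = / Vnorm y).
  { unfold r. rewrite sabs_sreal. apply Rabs_pos_eq. apply Rlt_le, Rinv_0_lt_compat. lra. }
  specialize (Hu (fun _ v => smul r (Bf v y))).
  assert (Hball : forall i, (i < 1)%nat -> in_dual_ball (fun v : E i => smul r (Bf v y))).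
  { intros i _. split.
    - intros a v w. simpl. rewrite Bf_lin1. apply smul_lin.
    - intros v. simpl. rewrite sabs_mul, Hr. pose proof (Bf_bound k v y).
      apply (Rmult_le_reg_l (Vnorm y)); [lra|].
      rewrite <- Rmult_assoc, Rinv_r by lra. nra. }
  specialize (Hu Hball). simpl in Hu.
  change (sabs (ssum (fun x : pt E => smul (sone k) (smul r (Tm x y))) u) <= c) in Hu.
  rewrite (ssum_scale r (fun x => Tm x y) u) in Hu. rewrite sabs_mul, Hr in Hu.
  simpl. pose proof (sabs_ge0 _ (ssum (fun x => Tm x y) u)).
  apply (Rmult_le_compat_l (Vnorm y)) in Hu; [|lra].
  rewrite <- Rmult_assoc, Rinv_r in Hu by lra. lra.
Qed.
End Main.

Theorem proposition2p7 : forall k : field_kind, ~ Leps_represented_by_eps k.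
Proof.
intros k H.
destruct (H 1%nat (le_n 1) (fun _ => VB k) (VB k)) as [H1 _].
assert (HT : in_Leps_dual 1 (Tm k)) by (split; [apply Tm_L | exists 1; apply Tm_Leps]).
destruct (H1 (Tm k) HT) as [_ Hiff].
assert (Hd : eps_dual_bound 1 (Tm k) 1) by (apply Hiff; [lra | apply Tm_Leps]).
set (V := VB k).
set (e1 := (sone k, szero k) : V). set (e2 := (szero k, sone k) : V).
set (f1 := vadd V (vscal V (sone k) e1) e2).
set (f2 := vadd V (vscal V (sone k) e1) (vadd V (vscal V (sopp (sone k)) e2) (vzero V))).
set (u := ((fun _ : nat => e1, f1) :: (fun _ : nat => e2, f2) :: nil) : list (pt (fun _ => V) * V)).
specialize (Hd u 3).
assert (Hval : ssum (fun p => Tm k (fst p) (snd p)) u = sreal k 4).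
{ unfold u, f1, f2, e1, e2, V, Tm, Bf; cbn. destruct k; cbn.
  - ring.
  - unfold cadd, cmul, copp; cbn. f_equal; ring. }
rewrite Hval, sabs_sreal, Rabs_pos_eq in Hd by lra.
enough (eps_le1 1 u 3) by (specialize (Hd H0); lra).
intros phi psi Hphi Hpsi.
destruct (Hphi 0%nat ltac:(lia)) as [_ Hb]. destruct Hpsi as [Hl Hpb].
assert (Hz : psi (vzero V) = szero k).
{ apply sabs_eq0. pose proof (Hpb (vzero V)). pose proof (sabs_ge0 _ (psi (vzero V))).
  assert (vnorm V (vzero V) = 0) by (simpl; unfold Vnorm; simpl; rewrite sabs_0; lra). lra. }
assert (Hn1 : vnorm V e1 = 1) by (simpl; unfold Vnorm; simpl; rewrite sabs_1, sabs_0; lra).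
assert (Hn2 : vnorm V e2 = 1) by (simpl; unfold Vnorm; simpl; rewrite sabs_1, sabs_0; lra).
assert (Hs1 := Hb e1). assert (Hs2 := Hb e2). assert (Ht1 := Hpb e1). assert (Ht2 := Hpb e2).
rewrite Hn1 in Hs1, Ht1. rewrite Hn2 in Hs2, Ht2.
assert (Hf1 : psi f1 = sadd (smul (sone k) (psi e1)) (psi e2)) by apply Hl.
assert (Hf2 : psi f2 = sadd (smul (sone k) (psi e1))
                (sadd (smul (sopp (sone k)) (psi e2)) (szero k))).
{ unfold f2. rewrite Hl. f_equal. rewrite Hl, Hz. reflexivity. }
pose proof (key_ineq k (psi e1) (psi e2) Ht1 Ht2) as Hk.
rewrite <- Hf1, <- Hf2 in Hk.
unfold u. simpl ssum. simpl sprod.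
eapply Rle_trans; [apply sabs_tri|].
eapply Rle_trans; [apply Rplus_le_compat_l, sabs_tri|].
rewrite sabs_0, !sabs_mul, !sabs_1.
pose proof (sabs_ge0 _ (psi f1)). pose proof (sabs_ge0 _ (psi f2)).
pose proof (sabs_ge0 _ (phi 0%nat e1)). pose proof (sabs_ge0 _ (phi 0%nat e2)).
simpl fst. simpl snd. nra.
Qed.
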